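(* Let $r\ge2$, $d_1=1$, $\lambda_1=0$, $d_i\ge2$ integers and $\lambda_i>0$ for $i=2,\dots,r$, $n=\sum_id_i$. In the variables $(X_1,\dots,X_r,Y_2,\dots,Y_r)$ consider the system $X_i'=X_i(\mathcal G-1)+\frac{\lambda_iY_i^2}{\sqrt{d_i}}$ ($i=1,\dots,r$), $Y_i'=Y_i\big(\mathcal G-\frac{X_i}{\sqrt{d_i}}\big)$ ($i=2,\dots,r$), where $\mathcal G=\sum_{j=1}^rX_j^2$. Let $\mathcal L=\sum_{i=1}^rX_i^2+\sum_{i=2}^r\lambda_iY_i^2-1$, $\mathcal H=\sum_{i=1}^r\sqrt{d_i}X_i$, $$\mathcal D=\{\mathcal L=0,\ \mathcal H=1\}\cap\{Y_i>0\ (i\ge2),\ |X_1-1|<\sqrt2\},$$ and $$\hat{\mathscr F}=\frac{1-\frac{1}{n-1}(1-X_1)^2}{\prod_{i=2}^r\big(\sqrt{\lambda_i}\,Y_i\big)^{\frac{2d_i}{n-1}}}.$$ Then $\hat{\mathscr F}$ is non-increasing along every trajectory of this system lying in $\mathcal D$. *)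

(* Defs.v *)
From Stdlib Require Import Reals.
From Coquelicot Require Import Coquelicot.
Open Scope R_scope.

(* Indices i = 1..r of the paper are encoded as 0..r-1 (paper index i <-> code i-1). *)

Fixpoint sumR (m : nat) (f : nat -> R) : R :=
  match m with O => 0 | S k => sumR k f + f k end.

Fixpoint prodR (m : nat) (f : nat -> R) : R :=
  match m with O => 1 | S k => prodR k f * f k end.

Fixpoint sumN (m : nat) (f : nat -> nat) : nat :=
  match m with O => O | S k => (sumN k f + f k)%nat end.

Definition Gfun (r : nat) (x : nat -> R) : R := sumR r (fun j => x j ^ 2).

Definition Lfun (r : nat) (lam : nat -> R) (x y : nat -> R) : R :=
  sumR r (fun i => x i ^ 2) + sumR (r - 1) (fun k => lam (S k) * y (S k) ^ 2) - 1.

Definition Hfun (r : nat) (d : nat -> nat) (x : nat -> R) : R :=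
  sumR r (fun i => sqrt (INR (d i)) * x i).

Definition inD (r : nat) (d : nat -> nat) (lam : nat -> R) (x y : nat -> R) : Prop :=
  Lfun r lam x y = 0 /\ Hfun r d x = 1 /\
  (forall i : nat, (1 <= i < r)%nat -> 0 < y i) /\
  Rabs (x 0%nat - 1) < sqrt 2.

Definition Fhat (r : nat) (d : nat -> nat) (lam : nat -> R) (x y : nat -> R) : R :=
  let n := INR (sumN r d) in
  (1 - (1 - x 0%nat) ^ 2 / (n - 1)) /
  prodR (r - 1) (fun k => Rpower (sqrt (lam (S k)) * y (S k)) (2 * INR (d (S k)) / (n - 1))).

(* Main.v *)
Require Import Defs.
From Stdlib Require Import Reals Lra Lia.
From Coquelicot Require Import Coquelicot.
Open Scope R_scope.
From Stdlib Require Import Lra Lia.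

Lemma sumR_ext m f g : (forall k, (k < m)%nat -> f k = g k) -> sumR m f = sumR m g.
Proof. induction m; simpl; intros H; auto. rewrite IHm by (intros; apply H; lia). rewrite H by lia. reflexivity. Qed.

Lemma sumR_plus m f g : sumR m (fun k => f k + g k) = sumR m f + sumR m g.
Proof. induction m; simpl; [lra|]. rewrite IHm. lra. Qed.

Lemma sumR_scal m c f : sumR m (fun k => c * f k) = c * sumR m f.
Proof. induction m; simpl; [lra|]. rewrite IHm. lra. Qed.

Lemma sumR_nonneg m f : (forall k, (k < m)%nat -> 0 <= f k) -> 0 <= sumR m f.
Proof. induction m; simpl; intros H; [lra|]. assert (0 <= f m) by (apply H; lia).
 assert (0 <= sumR m f) by (apply IHm; intros; apply H; lia). lra. Qed.

Lemma sumR_shift m f : sumR (S m) f = f 0%nat + sumR m (fun k => f (S k)).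
Proof. induction m; simpl in *; [lra|]. rewrite IHm. lra. Qed.

Lemma sumN_shift m f : sumN (S m) f = (f 0%nat + sumN m (fun k => f (S k)))%nat.
Proof. induction m; simpl in *; [lia|]. rewrite IHm. lia. Qed.

Lemma INR_sumN m f : INR (sumN m f) = sumR m (fun k => INR (f k)).
Proof. induction m; simpl; [reflexivity|]. rewrite plus_INR, IHm. reflexivity. Qed.

Lemma prodR_exp m f : prodR m (fun k => exp (f k)) = exp (sumR m f).
Proof. induction m; simpl. now rewrite exp_0. rewrite IHm, exp_plus. reflexivity. Qed.

Lemma is_derive_sumR m (f : nat -> R -> R) f' t :
  (forall k, (k < m)%nat -> is_derive (f k) t (f' k)) ->
  is_derive (fun t => sumR m (fun k => f k t)) t (sumR m f').
Proof. induction m; simpl; intros H.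
 - apply (is_derive_const 0).
 - apply (is_derive_plus (fun t => sumR m (fun k => f k t)) (f m)).
   apply IHm; intros; apply H; lia. apply H; lia. Qed.

Lemma rbar_lt_le_trans (a : Rbar) (s x : R) : Rbar_lt a s -> s <= x -> Rbar_lt a x.
Proof. destruct a; simpl; intros; auto; lra. Qed.
Lemma rbar_le_lt_trans (b : Rbar) (s x : R) : Rbar_lt x b -> s <= x -> Rbar_lt s b.
Proof. destruct b; simpl; intros; auto; lra. Qed.
Lemma dln (y : R -> R) c y' t : 0 < c -> 0 < y t -> is_derive y t y' -> is_derive (fun t => ln (c * y t)) t (y' / y t).
intros. 
assert (A := is_derive_comp ln (fun t => c * y t) t _ _ (is_derive_ln (c * y t) ltac:(nra)) (is_derive_scal y t c y' H1)).
replace (y' / y t) with ((c * y') * / (c * y t)). exact A.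
field. lra.
Qed.
Lemma is_derive_ext' (f g : R -> R) x (v w : R) : (forall t, f t = g t) -> is_derive f x v -> v = w -> is_derive g x w.
Proof. intros E A ->. eapply is_derive_ext; [exact E| exact A]. Qed.
Ltac rsimp := do 4 (unfold plus, scal, mult, minus, opp, zero, one; simpl); try unfold Rminus.
Lemma dprod (f g : R -> R) f' g' t : is_derive f t f' -> is_derive g t g' -> is_derive (fun t => f t * exp (- g t)) t (f' * exp (- g t) + f t * (- g' * exp (- g t))).
Proof.
intros. apply (is_derive_mult f (fun t => exp (- g t))). auto.
apply (is_derive_comp exp (fun t => - g t)). apply is_derive_exp. apply (is_derive_opp g). auto.
intros; apply Rmult_comm.
Qed.

Theorem lemma4p2
  (r : nat) (d : nat -> nat) (lam : nat -> R)
  (hr : (2 <= r)%nat)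
  (hd0 : d 0%nat = 1%nat) (hl0 : lam 0%nat = 0)
  (hd : forall i : nat, (1 <= i < r)%nat -> (2 <= d i)%nat)
  (hl : forall i : nat, (1 <= i < r)%nat -> 0 < lam i)
  (a b : Rbar) (X Y : nat -> R -> R)
  (hX : forall t : R, Rbar_lt a t -> Rbar_lt t b ->
     forall i : nat, (i < r)%nat ->
       is_derive (X i) t
         (X i t * (Gfun r (fun j => X j t) - 1)
          + lam i * (Y i t) ^ 2 / sqrt (INR (d i))))
  (hY : forall t : R, Rbar_lt a t -> Rbar_lt t b ->
     forall i : nat, (1 <= i < r)%nat ->
       is_derive (Y i) t
         (Y i t * (Gfun r (fun j => X j t) - X i t / sqrt (INR (d i)))))
  (hD : forall t : R, Rbar_lt a t -> Rbar_lt t b ->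
     inD r d lam (fun j => X j t) (fun j => Y j t)) :
  forall s t : R, Rbar_lt a s -> Rbar_lt t b -> s <= t ->
    Fhat r d lam (fun j => X j t) (fun j => Y j t)
    <= Fhat r d lam (fun j => X j s) (fun j => Y j s).
Proof.
  intros s t Has Htb Hst.
  destruct r as [|q]; [lia|].
  assert (Hq : (1 <= q)%nat) by lia.
  set (m := INR (sumN (S q) d) - 1).
  assert (Hm : m = sumR q (fun k => INR (d (S k)))).
  { unfold m. rewrite INR_sumN, sumR_shift, hd0. simpl. lra. }
  assert (Hm2 : 2 <= m).
  { rewrite Hm. destruct q as [|q']; [lia|]. rewrite sumR_shift.
    assert (2 <= INR (d 1%nat)) by (apply (le_INR 2); apply hd; lia).
    assert (0 <= sumR q' (fun k => INR (d (S (S k))))) by (apply sumR_nonneg; intros; apply pos_INR).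
    lra. }
  set (c := fun k => 2 * INR (d (S k)) / m).
  set (Sf := fun t => sumR q (fun k => c k * ln (sqrt (lam (S k)) * Y (S k) t))).
  set (Nf := fun t => 1 - (1 - X 0%nat t) ^ 2 / m).
  assert (HF : forall t, Fhat (S q) d lam (fun j => X j t) (fun j => Y j t) = Nf t * exp (- Sf t)).
  { intros t0. unfold Fhat, Rpower. cbv zeta. replace (S q - 1)%nat with q by lia.
    rewrite (prodR_exp q (fun k => 2 * INR (d (S k)) / (INR (sumN (S q) d) - 1) * ln (sqrt (lam (S k)) * Y (S k) t0))).
    rewrite exp_Ropp. unfold Nf, Sf, c, m. unfold Rdiv at 1. reflexivity. }
  rewrite !HF.
  set (g := fun t => Nf t * exp (- Sf t)).
  change (g t <= g s).
  assert (Hder : forall x : R, Rbar_lt a x -> Rbar_lt x b -> exists v, is_derive g x v /\ v <= 0).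
  { intros x Hax Hxb.
    set (G := Gfun (S q) (fun j => X j x)).
    destruct (hD x Hax Hxb) as [HL [HH [HYp Hx0]]].
    set (Sd := sumR q (fun k => c k * (G - X (S k) x / sqrt (INR (d (S k)))))).
    set (Nd := 2 * (1 - X 0%nat x) * (X 0%nat x * (G - 1)) / m).
    assert (dN : is_derive Nf x Nd).
    { assert (A := hX x Hax Hxb 0%nat ltac:(lia)). rewrite hl0 in A. fold G in A.
      assert (B := is_derive_minus (fun _ => 1) (X 0%nat) x _ _ (is_derive_const 1 x) A).
      assert (C := is_derive_mult _ _ x _ _ B B Rmult_comm).
      assert (E := is_derive_plus _ _ x _ _ (is_derive_const 1 x) (is_derive_scal _ x (- / m) _ C)).
      refine (is_derive_ext' _ _ x _ _ _ E _).
      - intros t0. unfold Nf. rsimp. field. lra.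
      - unfold Nd. rsimp. rewrite hd0. change (INR 1) with 1. rewrite sqrt_1. field. lra. }
    assert (dS : is_derive Sf x Sd).
    { apply (is_derive_sumR q (fun k t => c k * ln (sqrt (lam (S k)) * Y (S k) t))).
      intros k Hk.
      assert (Hl : 0 < lam (S k)) by (apply hl; lia).
      assert (Hy : 0 < Y (S k) x) by (apply HYp; lia).
      assert (A := dln (Y (S k)) (sqrt (lam (S k))) _ x (sqrt_lt_R0 _ Hl) Hy (hY x Hax Hxb (S k) ltac:(lia))).
      assert (B := is_derive_scal _ x (c k) _ A).
      refine (is_derive_ext' _ _ x _ _ _ B _).
      - intros t0. reflexivity.
      - rsimp. fold G. field. split; [|lra].
        apply Rgt_not_eq, sqrt_lt_R0. apply lt_0_INR. assert (2 <= d (S k))%nat by (apply hd; lia). lia. }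
    exists (Nd * exp (- Sf x) + Nf x * (- Sd * exp (- Sf x))).
    split. { apply (dprod Nf Sf Nd Sd x dN dS). }
    set (u := 1 - X 0%nat x).
    set (P := sumR q (fun k => sqrt (INR (d (S k))) * X (S k) x)).
    set (Q := sumR q (fun k => X (S k) x ^ 2)).
    assert (HP : P = u).
    { unfold Hfun in HH. rewrite sumR_shift, hd0 in HH. change (INR 1) with 1 in HH.
      rewrite sqrt_1 in HH. unfold u, P. simpl in HH. lra. }
    assert (HG : G = X 0%nat x ^ 2 + Q).
    { unfold G, Gfun. rewrite sumR_shift. reflexivity. }
    assert (Hsd : forall k, (k < q)%nat -> INR (d (S k)) = sqrt (INR (d (S k))) * sqrt (INR (d (S k))) /\ 0 < sqrt (INR (d (S k)))).
    { intros k Hk. assert (2 <= d (S k))%nat by (apply hd; lia).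
      assert (0 < INR (d (S k))) by (apply lt_0_INR; lia).
      split. symmetry; apply sqrt_sqrt; lra. apply sqrt_lt_R0; lra. }
    assert (HSd : Sd = 2 / m * (m * G - P)).
    { unfold Sd. rewrite (sumR_ext q _ (fun k => 2 / m * (G * INR (d (S k)) + (-1) * (sqrt (INR (d (S k))) * X (S k) x)))).
      - rewrite sumR_scal, sumR_plus, sumR_scal, sumR_scal, <- Hm. fold P. ring.
      - intros k Hk. destruct (Hsd k Hk) as [E Hp]. set (sd := sqrt (INR (d (S k)))) in *. unfold c. rewrite E. field. lra. }
    assert (HQ : 0 <= Q - 2 * (u / m) * P + (u / m) ^ 2 * m).
    { assert (A := sumR_nonneg q (fun k => (X (S k) x - u / m * sqrt (INR (d (S k)))) ^ 2)
        ltac:(intros; apply pow2_ge_0)).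
      rewrite (sumR_ext q _ (fun k => X (S k) x ^ 2 + ((-2 * (u / m)) * (sqrt (INR (d (S k))) * X (S k) x) + (u / m) ^ 2 * INR (d (S k))))) in A.
      - rewrite !sumR_plus, !sumR_scal, <- Hm in A. fold Q P in A. lra.
      - intros k Hk. destruct (Hsd k Hk) as [E Hp]. set (sd := sqrt (INR (d (S k)))) in *. rewrite E. ring. }
    assert (Hu2 : u ^ 2 < 2).
    { assert (S2 := sqrt_sqrt 2 ltac:(lra)). assert (S0 := sqrt_pos 2).
      destruct (Rabs_def2 _ _ Hx0). unfold u. nra. }
    assert (Hum : u < m) by nra.
    assert (HGu : u ^ 2 <= m * G).
    { rewrite HP in HQ. rewrite HG.
      assert (0 <= m * Q - u ^ 2).
      { replace (m * Q - u ^ 2) with (m * (Q - 2 * (u / m) * u + (u / m) ^ 2 * m)) by (field; lra). nra. }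
      nra. }
    assert (HE : Nd - Nf x * Sd = - 2 * (m - u) * (m * G - u ^ 2) / (m * m)).
    { rewrite HSd, HP. unfold Nd, Nf. fold u. replace (X 0%nat x) with (1 - u) by (unfold u; ring). field. lra. }
    assert (Hneg : Nd - Nf x * Sd <= 0).
    { rewrite HE. unfold Rdiv. apply Rmult_le_0_r.
      - assert (0 <= (m - u) * (m * G - u ^ 2)) by (apply Rmult_le_pos; lra). lra.
      - apply Rlt_le, Rinv_0_lt_compat. nra. }
    assert (Hex := exp_pos (- Sf x)).
    replace (Nd * exp (- Sf x) + Nf x * (- Sd * exp (- Sf x))) with (exp (- Sf x) * (Nd - Nf x * Sd)) by ring.
    nra. }
  assert (Hin : forall x : R, s <= x <= t -> Rbar_lt a x /\ Rbar_lt x b).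
  { intros x [H1 H2]. split. apply (rbar_lt_le_trans a s x Has H1). apply (rbar_le_lt_trans b x t Htb H2). }
  destruct (MVT_gen g s t (Derive g)) as [c0 [Hc Heq]].
  - intros x Hx. rewrite Rmin_left, Rmax_right in Hx by lra.
    destruct (Hin x ltac:(lra)) as [H1 H2]. destruct (Hder x H1 H2) as [v [Hv _]].
    rewrite (is_derive_unique _ _ _ Hv). exact Hv.
  - intros x Hx. rewrite Rmin_left, Rmax_right in Hx by lra.
    destruct (Hin x Hx) as [H1 H2]. destruct (Hder x H1 H2) as [v [Hv _]].
    apply continuity_pt_filterlim. apply (ex_derive_continuous g x). exists v. exact Hv.
  - rewrite Rmin_left, Rmax_right in Hc by lra.
    destruct (Hin c0 Hc) as [H1 H2]. destruct (Hder c0 H1 H2) as [v [Hv Hv0]].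
    rewrite (is_derive_unique _ _ _ Hv) in Heq. nra.
Qed.
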